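(* Let $A_{\mathbbm{1}}$ be the matrix of the quadratic form $q_{\mathbbm{1}}$ on the space of polynomials of degree at most $1$ on $\mathbb{R}^{n(n-1)/2}$, in the monomial basis $\{1\}\cup\{x_{ij}\}$, where $\mathbbm{1}(x)=1$ for all $x\in X$; identify a polynomial of degree at most $1$ with its coefficient vector. Then for any $1\le i\le n$, $2-\sum_{j\ne i}x_{ij}$ is an eigenvector of $A_{\mathbbm{1}}$ with eigenvalue $0$, and for any distinct $\alpha,\beta,\gamma,\delta\in\{1,\dotsc,n\}$, $x_{\alpha\beta}-x_{\beta\gamma}+x_{\gamma\delta}-x_{\delta\alpha}$ is an eigenvector of $A_{\mathbbm{1}}$ with eigenvalue $\frac{2}{n-1}$.
   Context: Let $N=n(n-1)/2$, coordinates of $\mathbb{R}^N$ indexed by unordered pairs $\{i,j\}$ of distinct elements of $\{1,\dotsc,n\}$, written $x_{ij}=x_{ji}$. Let $X\subset\mathbb{R}^N$ be the set of incidence vectors of Hamiltonian cycles of $K_n$. For $f:X\to\mathbb{R}$, $q_f(h)=\frac{1}{|X|}\sum_{x\in X}f(x)h(x)^2$, and its matrix in the monomial basis has entry indexed by monomials $\mu,\nu$ equal to $\frac{1}{|X|}\sum_{x\in X}f(x)\mu(x)\nu(x)$. *)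

(* Defs.v *)
From HB Require Import structures.
From mathcomp Require Import all_boot all_order all_algebra all_fingroup.
Unset Printing Implicit Defensive.
Import Order.TTheory GRing.Theory Num.Theory.
Local Open Scope ring_scope.

(* Unordered pairs {i,j} of distinct vertices of K_n: the coordinates of R^N. *)
Definition Edge (n : nat) := {e : {set 'I_n} | #|e| == 2}.

(* Monomials of degree <= 1: None = the constant 1, Some e = x_e. *)
Definition Mono (n : nat) := option (Edge n).

Definition hamiltonian {n : nat} (H : {set {set 'I_n}}) : bool :=
  [exists s : {perm 'I_n}, H == [set [set s k; s (ordS k)] | k : 'I_n]].

(* X, identified with the set of edge sets of Hamiltonian cycles;
   the incidence vector of H has x_e = 1 iff e \in H. *)
Definition HamX (n : nat) : {set {set {set 'I_n}}} := [set H | hamiltonian H].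

Definition mono_eval (R : nzRingType) {n : nat} (m : Mono n) (H : {set {set 'I_n}}) : R :=
  if m is Some e then (val e \in H)%:R else 1.

(* Matrix of q_f in the monomial basis (basis indexed via enum_val). *)
Definition qmat {R : fieldType} {n : nat} (f : {set {set 'I_n}} -> R)
  : 'M[R]_#|{: Mono n}| :=
  \matrix_(k, l) ((#|HamX n|%:R)^-1 *
     \sum_(H in HamX n) f H * mono_eval R (enum_val k) H * mono_eval R (enum_val l) H).

Definition one_fun (R : nzRingType) (n : nat) : {set {set 'I_n}} -> R := fun _ => 1.

Definition A1 (R : fieldType) (n : nat) := qmat (@one_fun R n).

Definition lpoly (R : nzRingType) (n : nat) := {ffun Mono n -> R}.

Definition lconst (R : nzRingType) (n : nat) (c : R) : lpoly R n :=
  [ffun m => if m is None then c else 0].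

Definition xvar (R : nzRingType) {n : nat} (i j : 'I_n) : lpoly R n :=
  [ffun m => if m is Some e then (val e == [set i; j])%:R else 0].

Definition coefvec {R : nzRingType} {n : nat} (p : lpoly R n) : 'cV[R]_#|{: Mono n}| :=
  \col_k p (enum_val k).

Definition eigenvector {R : fieldType} {m : nat} (A : 'M[R]_m) (v : 'cV[R]_m) (lam : R) :=
  v != 0 /\ A *m v = lam *: v.

(* Main.v *)
Require Import Defs.
From HB Require Import structures.
From mathcomp Require Import all_boot all_order all_algebra all_fingroup.
From mathcomp Require Import ring lra zify.
Import Order.TTheory GRing.Theory Num.Theory.
Local Open Scope ring_scope.

Definition ind {R : nzRingType} {n : nat} (e : {set 'I_n}) (H : {set {set 'I_n}}) : R :=
  (e \in H)%:R.

Definition actp {n : nat} (s : {perm 'I_n}) (H : {set {set 'I_n}}) : {set {set 'I_n}} :=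
  [set e : {set 'I_n} | s @: e \in H].

Lemma imset2 (T U : finType) (f : T -> U) x y : f @: [set x; y] = [set f x; f y].
Proof. by rewrite imsetU1 imset_set1. Qed.

Lemma set2C (T : finType) (x y : T) : [set x; y] = [set y; x].
Proof. by rewrite setUC. Qed.

Lemma permV_imset (n : nat) (s : {perm 'I_n}) (e : {set 'I_n}) : (s^-1)%g @: (s @: e) = e.
Proof.
rewrite -imset_comp -[RHS]imset_id; apply: eq_imset => x /=; exact: permK.
Qed.

Lemma actpK (n : nat) (s : {perm 'I_n}) H : actp (s^-1)%g (actp s H) = H.
Proof.
apply/setP => e; rewrite !in_set.
by have := @permV_imset n (s^-1)%g e; rewrite invgK => ->.
Qed.

Lemma ham_act (n : nat) (s : {perm 'I_n}) H : hamiltonian H -> hamiltonian (actp s H).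
Proof.
case/existsP => t /eqP ->; apply/existsP; exists (t * s^-1)%g.
apply/eqP/setP => e; rewrite in_set.
apply/imsetP/imsetP => [[k _ Hk]|[k _ ->]]; exists k => //.
  by rewrite !permM -imset2 -Hk permV_imset.
by rewrite imset2 !permM !permKV.
Qed.

Lemma ham_actE (n : nat) (s : {perm 'I_n}) H : hamiltonian (actp s H) = hamiltonian H.
Proof.
apply/idP/idP; last exact: ham_act.
by move/(@ham_act n (s^-1)%g); rewrite actpK.
Qed.

Lemma sum_act (R : nzRingType) (n : nat) (s : {perm 'I_n}) (F : {set {set 'I_n}} -> R) :
  \sum_(H in HamX n) F H = \sum_(H in HamX n) F (actp s H).
Proof.
rewrite (reindex_inj (h := actp s)); last first.
  by apply: (can_inj (g := actp (s^-1)%g)) => H; rewrite actpK.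
by apply: eq_bigl => H; rewrite !inE ham_actE.
Qed.

Lemma ind_act (R : nzRingType) (n : nat) (s : {perm 'I_n}) e H :
  ind e (actp s H) = ind (s @: e) H :> R.
Proof. by rewrite /ind in_set. Qed.

Lemma valS (n : nat) (k : 'I_n) : val (ordS k) = if (k.+1 < n)%N then k.+1 else 0%N.
Proof.
rewrite /=; case: ifP => h; first by rewrite modn_small.
have -> : k.+1 = n by have := ltn_ord k; lia.
by rewrite modnn.
Qed.

Lemma ham_deg (R : numDomainType) (n : nat) (hn : (3 <= n)%N) H (u : 'I_n) :
  hamiltonian H -> \sum_(x | x != u) ind [set u; x] H = 2 :> R.
Proof.
case/existsP => s /eqP ->.
have [k0 ->] : exists k0, u = s k0 by exists (s^-1 u)%g; rewrite permKV.
set v1 := s (ordS k0); set v2 := s (ord_pred k0).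
have n1 : ordS k0 != k0.
  apply/eqP => /(congr1 val); rewrite valS; have := ltn_ord k0; case: ifP => ? /=; lia.
have n2 : ord_pred k0 != k0.
  apply/eqP => E; move: n1; by rewrite -{1}E ord_predK eqxx.
have n3 : ordS k0 != ord_pred k0.
  apply/eqP => E; have : ordS (ordS k0) = k0 by rewrite E ord_predK.
  move/(congr1 val); rewrite !valS; have := ltn_ord k0.
  by case: (ltnP k0.+1 n) => h1; case: ifP => h2 /=; lia.
have v1u : v1 != s k0 by rewrite (inj_eq perm_inj).
have v2u : v2 != s k0 by rewrite (inj_eq perm_inj).
have v12 : v2 != v1 by rewrite (inj_eq perm_inj) eq_sym.
have key : forall x, x != s k0 ->
  ([set s k0; x] \in [set [set s k; s (ordS k)] | k : 'I_n]) = (x == v1) || (x == v2).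
  move=> x xu; apply/imsetP/orP => [[k _ Hk]|[/eqP->|/eqP->]].
  - have : s k0 \in [set s k; s (ordS k)] by rewrite -Hk set21.
    have : x \in [set s k; s (ordS k)] by rewrite -Hk set22.
    rewrite !inE => hx; rewrite !(inj_eq perm_inj); case/orP => /eqP Hu.
      by subst k; move: hx; rewrite (negbTE xu) /= => ->; left.
    have Hk' : k = ord_pred k0 by rewrite Hu ordSK.
    subst k; move: hx; rewrite ord_predK (negbTE xu) orbF => /eqP ->.
    by right; rewrite /v2 eqxx.
  - by exists k0.
  - exists (ord_pred k0) => //; by rewrite ord_predK set2C.
rewrite /ind.
under eq_bigr => x hx do rewrite key //.
rewrite (bigD1 v1) //= (bigD1 v2) /=; last by rewrite v2u v12.
rewrite big1 ?eqxx ?orbT; last first.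
  by move=> x /andP [/andP [_ h1] h2]; rewrite (negbTE h1) (negbTE h2).
by rewrite addr0.
Qed.
Definition ev {R : nzRingType} {n : nat} (p : lpoly R n) (H : {set {set 'I_n}}) : R :=
  \sum_(m : Mono n) mono_eval R m H * p m.

Lemma sum_option (R : nzRingType) (T : finType) (F : option T -> R) :
  \sum_(m : option T) F m = F None + \sum_(x : T) F (Some x).
Proof.
have U : uniq (None :: map Some (enum T)).
  rewrite /= (map_inj_uniq (@Some_inj _)) enum_uniq andbT.
  by apply/mapP => [[x _]].
transitivity (\sum_(m <- None :: map Some (enum T)) F m).
  rewrite [RHS]big_uniq //; apply: eq_bigl => m; case: m => [x|] //=.
  by rewrite inE /= map_f ?mem_enum.
by rewrite big_cons big_map big_enum.
Qed.

Lemma ev_split (R : nzRingType) n (p : lpoly R n) H :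
  ev p H = p None + \sum_(e : Edge n) ((val e) \in H)%:R * p (Some e).
Proof. by rewrite /ev sum_option /= mul1r. Qed.

Lemma evD (R : nzRingType) n (p q : lpoly R n) H : ev (p + q) H = ev p H + ev q H.
Proof. by rewrite /ev -big_split; apply: eq_bigr => m _; rewrite ffunE mulrDr. Qed.

Lemma evB (R : nzRingType) n (p q : lpoly R n) H : ev (p - q) H = ev p H - ev q H.
Proof. by rewrite /ev -sumrB; apply: eq_bigr => m _; rewrite !ffunE mulrBr. Qed.

Lemma ev_sum (R : nzRingType) n (I : finType) (P : pred I) (F : I -> lpoly R n) H :
  ev (\sum_(i | P i) F i) H = \sum_(i | P i) ev (F i) H.
Proof.
rewrite /ev; under eq_bigr do rewrite sum_ffunE mulr_sumr.
exact: exchange_big.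
Qed.

Lemma ev_const (R : nzRingType) n c H : ev (lconst R n c) H = c.
Proof.
by rewrite ev_split ffunE big1 ?addr0 // => e _; rewrite ffunE mulr0.
Qed.

Lemma ev_xvar (R : nzRingType) n (i j : 'I_n) H :
  i != j -> ev (xvar R i j) H = ind [set i; j] H.
Proof.
move=> ij; rewrite ev_split ffunE add0r.
have he : #|[set i; j]| == 2 by rewrite cards2 ij.
pose e0 : Edge n := exist _ [set i; j] he.
rewrite (bigD1 e0) //= big1 ?addr0.
  by rewrite ffunE /= eqxx mulr1.
move=> e ne; rewrite ffunE.
have ne' : val e != [set i; j].
  by apply: contra ne => /eqP E; apply/eqP/val_inj.
by rewrite (negbTE ne') mulr0.
Qed.

Lemma A1_entry (R : fieldType) n (p : lpoly R n) k :
  (A1 R n *m coefvec p) k ord0 =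
  (#|HamX n|%:R)^-1 * \sum_(H in HamX n) mono_eval R (enum_val k) H * ev p H.
Proof.
rewrite !mxE.
under eq_bigr do rewrite !mxE -mulrA mulr_suml.
rewrite -mulr_sumr exchange_big /=; congr (_ * _).
apply: eq_bigr => H _.
rewrite /ev mulr_sumr.
rewrite (reindex (@enum_val _ (mem {: Mono n}))) /=; last first.
  by exists enum_rank => x _; [rewrite enum_valK | rewrite enum_rankK].
by apply: eq_bigr => l _; rewrite /one_fun mul1r mulrA.
Qed.

Definition S1 {R : nzRingType} {n : nat} (e : {set 'I_n}) : R :=
  \sum_(H in HamX n) ind e H.
Definition S2 {R : nzRingType} {n : nat} (e f : {set 'I_n}) : R :=
  \sum_(H in HamX n) ind e H * ind f H.

Lemma S1_act (R : nzRingType) n (s : {perm 'I_n}) e : S1 e = S1 (s @: e) :> R.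
Proof. by rewrite /S1 (sum_act _ _ s); apply: eq_bigr => H _; rewrite ind_act. Qed.

Lemma S2_act (R : nzRingType) n (s : {perm 'I_n}) e f : S2 e f = S2 (s @: e) (s @: f) :> R.
Proof. by rewrite /S2 (sum_act _ _ s); apply: eq_bigr => H _; rewrite !ind_act. Qed.

Lemma indK (R : nzRingType) n (e : {set 'I_n}) H : ind e H * ind e H = ind e H :> R.
Proof. by rewrite /ind; case: (e \in H); rewrite ?mulr1 ?mulr0. Qed.

Lemma sumc1 (R : nzRingType) n (v : 'I_n) (c : R) :
  \sum_(x | x != v) c = n%:R * c - c.
Proof.
have E : \sum_(x : 'I_n) c = n%:R * c by rewrite sumr_const card_ord mulr_natl.
by rewrite (bigD1 v) //= in E; rewrite -E addrC addrK.
Qed.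

Lemma sumc2 (R : nzRingType) n (u v : 'I_n) (c : R) : u != v ->
  \sum_(x | (x != v) && (x != u)) c = n%:R * c - c - c.
Proof.
move=> uv; have := sumc1 _ _ v c; rewrite (bigD1 u) //= => E.
by rewrite -E addrC addrK.
Qed.

Lemma sumc3 (R : nzRingType) n (u v w : 'I_n) (c : R) : u != w -> v != w -> v != u ->
  \sum_(x | (x != w) && (x != u) && (x != v)) c = n%:R * c - c - c - c.
Proof.
move=> uw vw vu; have := sumc2 _ _ _ _ c uw; rewrite (bigD1 v) /=; last by rewrite vw vu.
by move=> E; rewrite -E addrC addrK.
Qed.

Definition XX (R : nzRingType) n : R := #|HamX n|%:R.

Lemma LS1 (R : realFieldType) n (hn : (3 <= n)%N) (u v : 'I_n) : u != v ->
  (n%:R - 1) * S1 [set u; v] = 2 * XX R n.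
Proof.
move=> uv.
have E : \sum_(H in HamX n) \sum_(x | x != u) ind [set u; x] H = \sum_(H in HamX n) (2:R).
  by apply: eq_bigr => H; rewrite inE => hH; exact: ham_deg.
rewrite exchange_big /= sumr_const in E.
rewrite (eq_bigr (fun _ => S1 [set u; v])) in E; last first.
  move=> x xu; rewrite -/(S1 _) (S1_act _ _ (tperm x v)) imset2 tpermL tpermD //.
  by rewrite eq_sym.
rewrite sumc1 in E.
by rewrite mulrBl mul1r E /XX mulr_natr.
Qed.

Lemma LS2a (R : realFieldType) n (hn : (3 <= n)%N) (u v w : 'I_n) :
  u != v -> v != w -> u != w ->
  (n%:R - 2) * S2 [set u; v] [set v; w] = S1 [set u; v] :> R.
Proof.
move=> uv vw uw.
have E : \sum_(H in HamX n) \sum_(x | (x != v) && (x != u)) ind [set u; v] H * ind [set v; x] H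
         = \sum_(H in HamX n) ind [set u; v] H :> R.
  apply: eq_bigr => H; rewrite inE => hH.
  have := ham_deg R n hn H v hH; move/(congr1 (fun t => ind [set u; v] H * t)).
  rewrite mulr_sumr (bigD1 u) //=.
  rewrite /= (set2C _ v u) indK => E.
  by apply: (addrI (ind [set u; v] H)); rewrite E mulr_natr mulr2n.
rewrite exchange_big /= in E.
rewrite (eq_bigr (fun _ => S2 [set u; v] [set v; w])) in E; last first.
  move=> x /andP [xv xu]; rewrite -/(S2 _ _) (S2_act _ _ (tperm x w)) !imset2 tpermL.
  by rewrite !tpermD // eq_sym.
by rewrite sumc2 // in E; rewrite /S1 -E; ring.
Qed.

Lemma LS2b (R : realFieldType) n (hn : (3 <= n)%N) (u v w z : 'I_n) :
  u != v -> u != w -> u != z -> v != w -> v != z -> w != z ->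
  (n%:R - 3 != 0 :> R) ->
  (n%:R - 2) * S2 [set u; v] [set w; z] = 2 * S1 [set u; v] :> R.
Proof.
move=> uv uw uz vw vz wz m3.
have E : \sum_(H in HamX n) (ind [set u; v] H * ind [set w; u] H +
     (ind [set u; v] H * ind [set w; v] H +
     \sum_(x | (x != w) && (x != u) && (x != v)) ind [set u; v] H * ind [set w; x] H))
     = \sum_(H in HamX n) ind [set u; v] H * 2 :> R.
  apply: eq_bigr => H; rewrite inE => hH.
  have := ham_deg R n hn H w hH; move/(congr1 (fun t => ind [set u; v] H * t)) => <-.
  rewrite mulr_sumr; symmetry; rewrite (bigD1 u) //= (bigD1 v) //=; by rewrite vw eq_sym uv.
rewrite !big_split /= exchange_big /= -mulr_suml in E.
have Ed : \sum_(x | (x != w) && (x != u) && (x != v))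
    \sum_(H in HamX n) ind [set u; v] H * ind [set w; x] H
    = n%:R * S2 [set u; v] [set w; z] - S2 [set u; v] [set w; z]
      - S2 [set u; v] [set w; z] - S2 [set u; v] [set w; z] :> R.
  have vu : v != u by rewrite eq_sym.
  rewrite -(sumc3 _ _ u v w) //; apply: eq_bigr => x /andP [/andP [xw xu] xv].
  rewrite -/(S2 _ _) (S2_act _ _ (tperm x z)) !imset2 tpermL.
  by rewrite !tpermD // eq_sym.
rewrite Ed -/(S1 _) in E.
have m2 : n%:R - 2 != 0 :> R.
  by rewrite -natrB ?pnatr_eq0 //; lia.
have Ea : (n%:R - 2) * S2 [set u; v] [set w; u] = S1 [set u; v] :> R.
  by rewrite (set2C _ u v) (set2C _ w u) LS2a // eq_sym.
have Eb : (n%:R - 2) * S2 [set u; v] [set w; v] = S1 [set u; v] :> R.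
  by rewrite (set2C _ w v) LS2a.
move: E Ea Eb.
set Sa := S2 [set u; v] [set w; u]; set Sb := S2 [set u; v] [set w; v].
set Sd := S2 [set u; v] [set w; z]; set S := S1 [set u; v].
set m := (n%:R : R) => E Ea Eb.
change (Sa + (Sb + (m * Sd - Sd - Sd - Sd)) = S * 2) in E.
have Sa' : Sa = S / (m - 2) by rewrite -Ea [_ * Sa]mulrC mulfK.
have Sb' : Sb = S / (m - 2) by rewrite -Eb [_ * Sb]mulrC mulfK.
have Sd' : Sd = (2 * S - Sa - Sb) / (m - 3).
  apply: (mulIf m3); rewrite divfK //; rewrite -/m; lra.
rewrite Sd' Sa' Sb'; field.
by rewrite m2 m3.
Qed.

Definition P4 {R : nzRingType} {n : nat} (a b c d : 'I_n) (H : {set {set 'I_n}}) : R :=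
  ind [set a; b] H - ind [set b; c] H + ind [set c; d] H - ind [set d; a] H.

Lemma core (R : realFieldType) n (hn : (3 <= n)%N) (a b c d : 'I_n) :
  a != b -> a != c -> a != d -> b != c -> b != d -> c != d ->
  (n%:R - 3 != 0 :> R) ->
  \sum_(H in HamX n) ind [set a; b] H * P4 a b c d H = S1 [set a; b] :> R.
Proof.
move=> ab ac ad bc bd cd m3.
have -> : \sum_(H in HamX n) ind [set a; b] H * P4 a b c d H =
   S2 [set a; b] [set a; b] - S2 [set a; b] [set b; c] + S2 [set a; b] [set c; d]
   - S2 [set a; b] [set d; a] :> R.
  rewrite /S2 -sumrB -big_split -sumrB /=; apply: eq_bigr => H _; rewrite /P4; ring.
have -> : S2 [set a; b] [set a; b] = S1 [set a; b] :> R.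
  by apply: eq_bigr => H _; rewrite indK.
have m2 : n%:R - 2 != 0 :> R.
  by rewrite -natrB ?pnatr_eq0 //; lia.
have Ebc := LS2a R n hn a b c ab bc ac.
have Eda : (n%:R - 2) * S2 [set a; b] [set d; a] = S1 [set a; b] :> R.
  rewrite (set2C _ a b) (set2C _ d a) LS2a //; by rewrite eq_sym.
have Ecd := LS2b R n hn a b c d ab ac ad bc bd cd m3.
move: Ebc Eda Ecd; set x := S2 _ _; set y := S2 _ _; set z := S2 _ _.
set S := S1 _; set m := (n%:R : R) => Ex Ey Ez.
have x' : x = S / (m - 2) by rewrite -Ex [_ * x]mulrC mulfK.
have y' : y = S / (m - 2) by rewrite -Ey [_ * y]mulrC mulfK.
have z' : z = 2 * S / (m - 2) by rewrite -Ez [_ * z]mulrC mulfK.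
rewrite x' y' z'; field.
by rewrite m2.
Qed.

Lemma sum_zero (R : realFieldType) n (s : {perm 'I_n}) (F G : {set {set 'I_n}} -> R) :
  (forall H, F (actp s H) = F H) -> (forall H, G (actp s H) = - G H) ->
  \sum_(H in HamX n) F H * G H = 0.
Proof.
move=> hF hG.
have E : \sum_(H in HamX n) F H * G H = \sum_(H in HamX n) - (F H * G H).
  by rewrite (sum_act R n s); apply: eq_bigr => H _; rewrite hF hG mulrN.
rewrite sumrN in E; lra.
Qed.

Lemma tperm_fix n (x y : 'I_n) (e : {set 'I_n}) :
  (x \in e) = (y \in e) -> tperm x y @: e = e.
Proof.
move=> hxy; apply/eqP; rewrite eqEcard card_imset ?leqnn ?andbT; last exact: perm_inj.
apply/subsetP => _ /imsetP [w we ->].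
case: tpermP => [wx|wy|//]; subst w; by rewrite ?hxy // -hxy.
Qed.

Lemma set2_eqE (T : finType) (x y z w : T) :
  ([set x; y] == [set z; w]) = ((x == z) && (y == w)) || ((x == w) && (y == z)).
Proof.
apply/eqP/idP => [E|]; last first.
  by case/orP => /andP [/eqP -> /eqP ->] //; apply: set2C.
have : x \in [set z; w] by rewrite -E set21.
have : y \in [set z; w] by rewrite -E set22.
have : z \in [set x; y] by rewrite E set21.
have : w \in [set x; y] by rewrite E set22.
rewrite !inE.
by do 4 (case/orP => /eqP ?); subst; rewrite ?eqxx ?orbT.
Qed.

Lemma set2_card (T : finType) (e : {set T}) x y :
  #|e| == 2 -> x \in e -> y \in e -> x != y -> e = [set x; y].
Proof.
move=> he xe ye xy; apply/eqP; rewrite eq_sym eqEcard (eqP he) cards2 xy andbT.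
by apply/subsetP => z; rewrite !inE => /orP [/eqP->|/eqP->].
Qed.

Lemma HamX_gt0 n : (0 < #|HamX n|)%N.
Proof.
apply/card_gt0P; exists [set [set k; ordS k] | k : 'I_n]; rewrite inE.
by apply/existsP; exists 1%g; apply/eqP/eq_imset => k; rewrite !perm1.
Qed.

Lemma S1_const (R : realFieldType) n (hn : (3 <= n)%N) (u v x y : 'I_n) :
  u != v -> x != y -> S1 [set u; v] = S1 [set x; y] :> R.
Proof.
move=> uv xy; have m1 : n%:R - 1 != 0 :> R.
  by change (n%:R - 1%:R != 0 :> R); rewrite -natrB ?pnatr_eq0 //; lia.
apply: (mulfI m1); by rewrite !LS1.
Qed.

Lemma neq_by2 (T : finType) (A B : {set T}) x y :
  (x \in A) == (y \in A) -> (x \in B) != (y \in B) -> (A == B) = false.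
Proof. by move=> hA hB; apply/negbTE/eqP => AB; move: hB; rewrite -AB hA. Qed.

Lemma P4_act (R : comNzRingType) n (a b c d : 'I_n) H :
  a != b -> a != c -> a != d -> b != c -> b != d -> c != d ->
  P4 a b c d (actp (tperm a c) H) = - P4 a b c d H :> R /\
  P4 a b c d (actp (tperm b d) H) = - P4 a b c d H :> R.
Proof.
move=> ab ac ad bc bd cd.
have ba : b != a by rewrite eq_sym.
have ca : c != a by rewrite eq_sym.
have da : d != a by rewrite eq_sym.
have cb : c != b by rewrite eq_sym.
have db : d != b by rewrite eq_sym.
have dc : d != c by rewrite eq_sym.
rewrite /P4 !ind_act !imset2 !tpermL !tpermR !tpermD //.
rewrite (set2C _ c b) (set2C _ b a) (set2C _ a d) (set2C _ d c).
split; ring.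
Qed.

Theorem lemma4 (R : realFieldType) (n : nat) (hn : (3 <= n)%N) :
  (forall i : 'I_n,
     eigenvector (A1 R n)
       (coefvec (lconst R n 2 - \sum_(j < n | j != i) xvar R i j)) 0)
  /\
  (forall a b c d : 'I_n, uniq [:: a; b; c; d] ->
     eigenvector (A1 R n)
       (coefvec (xvar R a b - xvar R b c + xvar R c d - xvar R d a))
       (2 / (n - 1)%:R)).
Proof.
have Xne : (#|HamX n|%:R : R) != 0 by rewrite pnatr_eq0 -lt0n HamX_gt0.
have m1 : n%:R - 1 != 0 :> R.
  by change (n%:R - 1%:R != 0 :> R); rewrite -natrB ?pnatr_eq0 //; lia.
split.
- move=> i; split.
  + apply/negP => /eqP /matrixP /(_ (enum_rank None) ord0).
    rewrite !mxE enum_rankK !ffunE sum_ffunE big1 => [|j _]; last by rewrite ffunE.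
    by rewrite subr0 => /eqP; rewrite pnatr_eq0.
  + rewrite scale0r; apply/matrixP => k j0; rewrite ord1 A1_entry mxE.
    rewrite big1 ?mulr0 // => H hH.
    rewrite evB ev_const ev_sum.
    rewrite (eq_bigr (fun j => ind [set i; j] H)) => [|j ji]; last by rewrite ev_xvar // eq_sym.
    rewrite inE in hH.
    by rewrite ham_deg // subrr mulr0.
move=> a b c d Hu.
have n4 : (4 <= n)%N.
  have := @uniq_leq_size _ [:: a; b; c; d] (enum 'I_n) Hu.
  by rewrite size_enum_ord /=; apply => x _; rewrite mem_enum.
move: Hu; rewrite /= !inE !negb_or !andbT => /and3P [/and3P [ab ac ad] /andP [bc bd] cd].
have ba : b != a by rewrite eq_sym.
have ca : c != a by rewrite eq_sym.
have da : d != a by rewrite eq_sym.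
have cb : c != b by rewrite eq_sym.
have db : d != b by rewrite eq_sym.
have dc : d != c by rewrite eq_sym.
have m3 : n%:R - 3 != 0 :> R by rewrite -natrB ?pnatr_eq0 //; lia.
set p := (xvar R a b - xvar R b c + xvar R c d - xvar R d a).
have pS : forall e : Edge n, p (Some e) = (val e == [set a; b])%:R - (val e == [set b; c])%:R
    + (val e == [set c; d])%:R - (val e == [set d; a])%:R.
  by move=> e; rewrite !ffunE.
have pN : p None = 0 by rewrite !ffunE subrr addr0 subrr.
have evp : forall H, ev p H = P4 a b c d H.
  by move=> H; rewrite /p !(evB, evD) !ev_xvar.
have ab2 : #|[set a; b]| == 2 by rewrite cards2 ab.
split.
  apply/negP => /eqP/matrixP/(_ (enum_rank (Some (exist _ [set a; b] ab2))) ord0).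
  rewrite !mxE enum_rankK pS /= !set2_eqE !eqxx.
  rewrite (negbTE ab) (negbTE ac) (negbTE ad) (negbTE ba) (negbTE bc) (negbTE bd) /=.
  by move/eqP; rewrite subr0 addr0 subr0 oner_eq0.
apply/matrixP => k j0; rewrite ord1 A1_entry !mxE.
under eq_bigr do rewrite evp.
suff -> : \sum_(H in HamX n) mono_eval R (enum_val k) H * P4 a b c d H
          = S1 [set a; b] * p (enum_val k).
  have E := LS1 R n hn a b ab.
  have -> : S1 [set a; b] = 2 * #|HamX n|%:R / (n%:R - 1) :> R.
    by rewrite -/(XX R n) -E [_ * S1 _]mulrC mulfK.
  rewrite natrB; last exact: leq_trans _ n4.
  by field; rewrite Xne m1.
have nF := (negbTE ab, negbTE ac, negbTE ad, negbTE ba, negbTE bc, negbTE bd,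
             negbTE ca, negbTE cb, negbTE cd, negbTE da, negbTE db, negbTE dc).
have PA := P4_act R n a b c d _ ab ac ad bc bd cd.
case: (enum_val k) => [[e he]|]; last first.
  rewrite pN mulr0; apply: (sum_zero R n (tperm a c)) => H //.
  by case: (PA H).
rewrite pS /=.
rewrite (eq_bigr (fun H => ind e H * P4 a b c d H)); last by move=> H _.
case E1: ((a \in e) == (c \in e)).
  rewrite (sum_zero R n (tperm a c)); first last.
  - by move=> H; case: (PA H).
  - by move=> H; rewrite ind_act tperm_fix //; apply/eqP.
  rewrite !(neq_by2 _ _ _ _ _ E1) ?inE ?eqxx ?nF //=.
  by rewrite ?mulr0n; ring.
case E2: ((b \in e) == (d \in e)).
  rewrite (sum_zero R n (tperm b d)); first last.
  - by move=> H; case: (PA H).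
  - by move=> H; rewrite ind_act tperm_fix //; apply/eqP.
  rewrite !(neq_by2 _ _ _ _ _ E2) ?inE ?eqxx ?nF //=.
  by rewrite ?mulr0n; ring.
have hc : (c \in e) = ~~ (a \in e) by move: E1; case: (a \in e); case: (c \in e).
have hd : (d \in e) = ~~ (b \in e) by move: E2; case: (b \in e); case: (d \in e).
case ha: (a \in e); case hb: (b \in e); rewrite ha in hc; rewrite hb in hd.
- have ee := set2_card _ _ _ _ he ha hb ab; subst e.
  rewrite (core R n hn a b c d) // !set2_eqE !eqxx ?nF /=.
  by rewrite ?mulr0n ?mulr1n; ring.
- have ee := set2_card _ _ _ _ he ha hd ad; subst e.
  transitivity (- \sum_(H in HamX n) ind [set d; a] H * P4 d a b c H : R).
    by rewrite -sumrN; apply: eq_bigr => H _; rewrite (set2C _ a d) /P4; ring.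
  rewrite (core R n hn d a b c) // (S1_const R n hn d a a b) //.
  rewrite !set2_eqE !eqxx ?nF /=.
  by rewrite ?mulr0n ?mulr1n; ring.
- have ee := set2_card _ _ _ _ he hc hb cb; subst e.
  transitivity (- \sum_(H in HamX n) ind [set b; c] H * P4 b c d a H : R).
    by rewrite -sumrN; apply: eq_bigr => H _; rewrite (set2C _ c b) /P4; ring.
  rewrite (core R n hn b c d a) // (S1_const R n hn b c a b) //.
  rewrite !set2_eqE !eqxx ?nF /=.
  by rewrite ?mulr0n ?mulr1n; ring.
- have ee := set2_card _ _ _ _ he hc hd cd; subst e.
  transitivity (\sum_(H in HamX n) ind [set c; d] H * P4 c d a b H : R).
    by apply: eq_bigr => H _; rewrite /P4; ring.
  rewrite (core R n hn c d a b) // (S1_const R n hn c d a b) //.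
  rewrite !set2_eqE !eqxx ?nF /=.
  by rewrite ?mulr0n ?mulr1n; ring.
Qed.
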